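(* Let $\alpha:U\to V$ be a surjective transmission between commutative supertropical monoids, $M:=eU$, $N:=eV$, and $\gamma:=\alpha^\nu:M\to N$. (i) There exists a factorization $\alpha=\mu\circ\beta\circ\lambda$ with $\lambda$ an ideal compression of $U$, $\beta$ a strict ghost contraction, and $\mu$ a tangible fiber contraction over $N$. (ii) The factorization is essentially unique: if $\alpha=\mu'\circ\beta'\circ\lambda'$ is a second such factorization, then there exist isomorphisms of supertropical monoids $\rho$ over $M$ and $\sigma$ over $N$ such that $\lambda'=\rho\lambda$, $\mu'=\mu\sigma^{-1}$, $\beta'=\sigma\beta\rho^{-1}$. (iii) In particular one can choose $\lambda=\pi_{E(U,\mathfrak A)}:U\to\bar U:=U/E(U,\mathfrak A)$ with $\mathfrak A:=\mathfrak A_\alpha$ the ghost kernel of $\alpha$, $\beta=\pi_{F(\bar U,\gamma)}:\bar U\to W:=\bar U/F(\bar U,\gamma)$, and $\mu:W\to V$ the resulting tangible fiber contraction over $N$ with $\alpha=\mu\beta\lambda$.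
   Context: All monoids are commutative. A supertropical monoid is a monoid $(U,\cdot)$ with absorbing element $0$ and distinguished idempotent $e$ with $ex=0\Rightarrow x=0$, together with a total ordering on $M:=eU$, compatible with multiplication and with $0$ least, making $M$ a bipotent semiring (addition $=\max$). Tangible elements: $\mathcal T(U):=U\setminus eU$. A transmission $\alpha:U\to V$ is a map with $\alpha(0)=0$, $\alpha(1)=1$, $\alpha(xy)=\alpha(x)\alpha(y)$, $\alpha(e_U)=e_V$, and order-preserving on $eU$; its ghost part $\alpha^\nu:eU\to eV$ is its restriction; ghost kernel $\mathfrak A_\alpha:=\{x:\alpha(x)\in eV\}$, zero kernel $\mathfrak z_\alpha:=\alpha^{-1}(0)$. An isomorphism over $M$ is an isomorphism whose ghost part is the identity of $M$. A fiber contraction is a surjective transmission whose ghost part is an isomorphism; it is ''over $M$'' if $eV=eU=M$ and the ghost part is $\mathrm{id}_M$. An ideal compression is a fiber contraction over $M$ mapping $U\setminus\mathfrak A_\alpha$ bijectively onto $V\setminus N=\mathcal T(V)$. A transmission is tangible if $\alpha(\mathcal T(U))\subset\mathcal T(V)\cup\{0\}$. A ghost contraction is a transmission $\alpha$ whose ghost part maps $M$ onto $N$ and which maps $U\setminus(M\cup\mathfrak z_\alpha)$ bijectively onto $\mathcal T(V)$; it is strict if $\alpha^{-1}(0)\subset M$. For an equivalence relation $E$ on $U$ that is a TE-relation (multiplicative, order compatible on $M$, and $ex\sim_E0\Rightarrow x\sim_E0$), $U/E$ carries the unique supertropical monoid structure making $\pi_E:x\mapsto[x]_E$ a transmission. For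 an ideal $\mathfrak A\supseteq M$ of $U$, $E(U,\mathfrak A)$ is the TE-relation: $x\sim y$ iff $x=y$, or $x,y\in\mathfrak A$ and $ex=ey$; the ghost ideal of $U/E(U,\mathfrak A)$ is identified with $M$. For a surjective semiring homomorphism $\gamma:M\to N$, $F(U,\gamma)$ is the TE-relation: $x\sim y$ iff $x=y$, or $x,y\in M$ with $\gamma(x)=\gamma(y)$, or $\gamma(ex)=\gamma(ey)=0$; the ghost ideal of $U/F(U,\gamma)$ is identified with $N$. *)

(* Defs.v *)
Record STM := mkSTM {
  car :> Type;
  mul : car -> car -> car;
  one : car;
  zero : car;
  gh : car;
  le : car -> car -> Prop;
  mulA : forall x y z, mul x (mul y z) = mul (mul x y) z;
  mulC : forall x y, mul x y = mul y x;
  mul1x : forall x, mul one x = x;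
  mul0x : forall x, mul zero x = zero;
  gh_idem : mul gh gh = gh;
  gh_faithful : forall x, mul gh x = zero -> x = zero;
  le_refl : forall a, le (mul gh a) (mul gh a);
  le_antisym : forall a b, le (mul gh a) (mul gh b) -> le (mul gh b) (mul gh a) ->
                 mul gh a = mul gh b;
  le_trans : forall a b c, le (mul gh a) (mul gh b) -> le (mul gh b) (mul gh c) ->
                 le (mul gh a) (mul gh c);
  le_total : forall a b, le (mul gh a) (mul gh b) \/ le (mul gh b) (mul gh a);
  le_mul : forall a b c, le (mul gh a) (mul gh b) ->
                 le (mul (mul gh a) (mul gh c)) (mul (mul gh b) (mul gh c));
  le_0 : forall a, le zero (mul gh a)
}.

Arguments mul {s}.
Arguments one {s}.
Arguments zero {s}.
Arguments gh {s}.
Arguments le {s}.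

Section Defs.
Context {U V : STM}.

Definition ghost {X : STM} (x : X) : Prop := exists y, x = mul gh y.
Definition tangible {X : STM} (x : X) : Prop := ~ ghost x.

Definition surj {A B : Type} (f : A -> B) : Prop := forall b, exists a, f a = b.

Definition transmission (a : U -> V) : Prop :=
  a zero = zero /\ a one = one /\ (forall x y, a (mul x y) = mul (a x) (a y)) /\
  a gh = gh /\
  (forall x y, ghost x -> ghost y -> le x y -> le (a x) (a y)).

Definition ghost_kernel (a : U -> V) (x : U) : Prop := ghost (a x).
Definition zero_kernel (a : U -> V) (x : U) : Prop := a x = zero.

Definition ghost_part_iso (a : U -> V) : Prop :=
  (forall x y, ghost x -> ghost y -> a x = a y -> x = y) /\
  (forall w, ghost w -> exists x, ghost x /\ a x = w) /\
  (forall x y, ghost x -> ghost y -> le (a x) (a y) -> le x y).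

Definition fiber_contraction (a : U -> V) : Prop :=
  transmission a /\ surj a /\ ghost_part_iso a.

Definition ideal_compression (a : U -> V) : Prop :=
  fiber_contraction a /\
  (forall x y, ~ ghost_kernel a x -> ~ ghost_kernel a y -> a x = a y -> x = y) /\
  (forall x, ~ ghost_kernel a x -> tangible (a x)) /\
  (forall w, tangible w -> exists x, ~ ghost_kernel a x /\ a x = w).

Definition tangible_trans (a : U -> V) : Prop :=
  forall x, tangible x -> tangible (a x) \/ a x = zero.

Definition ghost_contraction (a : U -> V) : Prop :=
  transmission a /\
  (forall w, ghost w -> exists x, ghost x /\ a x = w) /\
  (forall x y, tangible x -> ~ zero_kernel a x -> tangible y -> ~ zero_kernel a y ->
      a x = a y -> x = y) /\
  (forall x, tangible x -> ~ zero_kernel a x -> tangible (a x)) /\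
  (forall w, tangible w -> exists x, tangible x /\ ~ zero_kernel a x /\ a x = w).

Definition strict_gc (a : U -> V) : Prop :=
  ghost_contraction a /\ (forall x, zero_kernel a x -> ghost x).

Definition E_rel (A : U -> Prop) (x y : U) : Prop :=
  x = y \/ (A x /\ A y /\ mul gh x = mul gh y).

(* the relation F(U, g), g only relevant on eU *)
Definition F_rel (g : U -> V) (x y : U) : Prop :=
  x = y \/ (ghost x /\ ghost y /\ g x = g y) \/
  (g (mul gh x) = zero /\ g (mul gh y) = zero).

Definition kernel_is {A B : Type} (f : A -> B) (R : A -> A -> Prop) : Prop :=
  forall x y, f x = f y <-> R x y.

End Defs.

Definition st_iso {U V : STM} (a : U -> V) (b : V -> U) : Prop :=
  transmission a /\ transmission b /\ (forall x, b (a x) = x) /\ (forall y, a (b y) = y).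

Definition is_factorization {U X W V : STM} (alpha : U -> V)
  (lam : U -> X) (bet : X -> W) (mu : W -> V) : Prop :=
  ideal_compression lam /\ strict_gc bet /\ fiber_contraction mu /\
  tangible_trans mu /\ (forall x, alpha x = mu (bet (lam x))).

(* Main.v *)
Require Import Defs.
From Stdlib Require Import ClassicalEpsilon ProofIrrelevance FunctionalExtensionality PropExtensionality Classical.

Lemma gh0 (X:STM) : @mul X gh zero = zero.
Proof. rewrite mulC. apply mul0x. Qed.
Lemma ghost0 (X:STM) : ghost (@zero X).
Proof. exists zero. now rewrite gh0. Qed.
Lemma gg (X:STM) (a:X) : mul gh (mul gh a) = mul gh a.
Proof. now rewrite mulA, gh_idem. Qed.
Lemma ghost_e (X:STM) (x:X) : ghost x -> mul gh x = x.
Proof. intros [y ->]. apply gg. Qed.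
Lemma ghost_gh (X:STM) (x:X): ghost (mul gh x).
Proof. now exists x. Qed.
Lemma gh_mul2 (X:STM) (a c:X) : mul gh (mul (mul gh a) (mul gh c)) = mul (mul gh a) (mul gh c).
Proof. rewrite mulA, gg. reflexivity. Qed.

Lemma tr_gh {U V:STM} (a:U->V) x : transmission a -> a (mul gh x) = mul gh (a x).
Proof. intros (H0&H1&Hm&Hg&Ho). now rewrite Hm, Hg. Qed.
Lemma tr_ghost {U V:STM} (a:U->V) (x:U): transmission a -> ghost x -> ghost (a x).
Proof. intros T [y ->]. rewrite (tr_gh a y T). apply ghost_gh. Qed.
Lemma fc_zero {U V:STM} (a:U->V) w : fiber_contraction a -> a w = zero -> w = zero.
Proof. intros (T&S&I1&I2&I3) H.
  apply gh_faithful. apply I1; try apply ghost_gh; try apply ghost0.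
  rewrite (tr_gh a w T), H, gh0. destruct T as (T0&_). now rewrite T0.
Qed.

Lemma sig_ext {A:Type} (Pr : A -> Prop) (a b : A) p q : a = b -> exist Pr a p = exist Pr b q.
Proof. intros ->. f_equal. apply proof_irrelevance. Qed.

Record QData (U:STM) := {
  R : U -> U -> Prop;
  qRrefl : forall x, R x x;
  qRsym : forall x y, R x y -> R y x;
  qRtrans : forall x y z, R x y -> R y z -> R x z;
  qRcong : forall x y z, R x y -> R (mul x z) (mul y z);
  leR : U -> U -> Prop;
  qcompat : forall x x' y y', R x x' -> R y y' -> leR x y -> leR x' y';
  qfaith : forall x, R (mul gh x) zero -> R x zero;
  qrefl : forall a, leR (mul gh a) (mul gh a);
  qanti : forall a b, leR (mul gh a) (mul gh b) -> leR (mul gh b) (mul gh a) -> R (mul gh a) (mul gh b);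
  qtrans : forall a b c, leR (mul gh a) (mul gh b) -> leR (mul gh b) (mul gh c) -> leR (mul gh a) (mul gh c);
  qtotal : forall a b, leR (mul gh a) (mul gh b) \/ leR (mul gh b) (mul gh a);
  qmulle : forall a b c, leR (mul gh a) (mul gh b) -> leR (mul (mul gh a) (mul gh c)) (mul (mul gh b) (mul gh c));
  q0 : forall a, leR zero (mul gh a)
}.
Arguments R {U}. Arguments leR {U}.

Section Quot.
Variable U : STM.
Variable d : QData U.

Definition QT := {P : U -> Prop | exists x, P = R d x}.
Definition qp (x : U) : QT := exist _ (R d x) (ex_intro _ x eq_refl).
Lemma qp_eq x y : qp x = qp y <-> R d x y.
Proof. split.
 - intros H. apply (f_equal (@proj1_sig _ _)) in H. simpl in H.
   pose proof (f_equal (fun f => f y) H) as H'. simpl in H'. rewrite H'. apply qRrefl.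
 - intros H. unfold qp. apply sig_ext. apply functional_extensionality. intros z.
   apply propositional_extensionality. split; intros Hz.
   + eapply qRtrans; [apply qRsym; exact H| exact Hz].
   + eapply qRtrans; [exact H| exact Hz].
Qed.
Definition qs (c : QT) : U := proj1_sig (constructive_indefinite_description _ (proj2_sig c)).
Lemma qp_qs c : qp (qs c) = c.
Proof. destruct c as [P HP]. unfold qs; simpl.
  destruct (constructive_indefinite_description _ HP) as [x Hx]. simpl.
  unfold qp. apply sig_ext. symmetry; exact Hx. Qed.
Lemma qp_ex c : exists x, c = qp x.
Proof. exists (qs c). symmetry; apply qp_qs. Qed.
Lemma R_qs x : R d (qs (qp x)) x.
Proof. apply qp_eq. apply qp_qs. Qed.

Definition qmul c e := qp (mul (qs c) (qs e)).
Lemma qmul_p x y : qmul (qp x) (qp y) = qp (mul x y).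
Proof. unfold qmul. apply qp_eq. eapply qRtrans. apply qRcong. apply R_qs.
  rewrite (mulC _ x), (mulC _ x). apply qRcong. apply R_qs. Qed.
Definition qle c e := leR d (qs c) (qs e).
Lemma qle_p x y : qle (qp x) (qp y) <-> leR d x y.
Proof. unfold qle. split; intros H; eapply qcompat; try exact H;
  try apply R_qs; apply qRsym; apply R_qs. Qed.

Ltac qd c := let x := fresh "x" in destruct (qp_ex c) as [x ->].

Lemma QmulA : forall x y z, qmul x (qmul y z) = qmul (qmul x y) z.
Proof. intros x y z. qd x. qd y. qd z. rewrite !qmul_p. now rewrite mulA. Qed.
Lemma QmulC : forall x y, qmul x y = qmul y x.
Proof. intros x y. qd x. qd y. rewrite !qmul_p. f_equal; apply mulC. Qed.
Lemma Qmul1x : forall x, qmul (qp one) x = x.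
Proof. intros x. qd x. rewrite !qmul_p. now rewrite mul1x. Qed.
Lemma Qmul0x : forall x, qmul (qp zero) x = qp zero.
Proof. intros x. qd x. rewrite !qmul_p. now rewrite mul0x. Qed.
Lemma Qgh_idem : qmul (qp gh) (qp gh) = qp gh.
Proof. rewrite !qmul_p. now rewrite gh_idem. Qed.
Lemma Qfaith : forall x, qmul (qp gh) x = qp zero -> x = qp zero.
Proof. intros x. qd x. rewrite qmul_p. intros H. apply qp_eq. apply qfaith. now apply qp_eq. Qed.
Lemma Qrefl : forall a, qle (qmul (qp gh) a) (qmul (qp gh) a).
Proof. intros a. qd a. rewrite qmul_p. apply qle_p, qrefl. Qed.
Lemma Qanti : forall a b, qle (qmul (qp gh) a) (qmul (qp gh) b) -> qle (qmul (qp gh) b) (qmul (qp gh) a) ->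
  qmul (qp gh) a = qmul (qp gh) b.
Proof. intros a b. qd a. qd b. rewrite !qmul_p. intros H1 H2. apply qp_eq.
  rewrite qle_p in H1, H2. now apply qanti. Qed.
Lemma Qtrans : forall a b c, qle (qmul (qp gh) a) (qmul (qp gh) b) -> qle (qmul (qp gh) b) (qmul (qp gh) c) ->
  qle (qmul (qp gh) a) (qmul (qp gh) c).
Proof. intros a b c. qd a. qd b. qd c. rewrite !qmul_p. intros H1 H2.
  rewrite qle_p in H1, H2. apply qle_p. eapply qtrans; eauto. Qed.
Lemma Qtotal : forall a b, qle (qmul (qp gh) a) (qmul (qp gh) b) \/ qle (qmul (qp gh) b) (qmul (qp gh) a).
Proof. intros a b. qd a. qd b. rewrite !qmul_p. rewrite !qle_p. apply qtotal. Qed.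
Lemma Qmulle : forall a b c, qle (qmul (qp gh) a) (qmul (qp gh) b) ->
  qle (qmul (qmul (qp gh) a) (qmul (qp gh) c)) (qmul (qmul (qp gh) b) (qmul (qp gh) c)).
Proof. intros a b c. qd a. qd b. qd c. rewrite !qmul_p. rewrite !qle_p. apply qmulle. Qed.
Lemma Q0 : forall a, qle (qp zero) (qmul (qp gh) a).
Proof. intros a. qd a. rewrite qmul_p. apply qle_p, q0. Qed.

Definition QSTM : STM := mkSTM QT qmul (qp one) (qp zero) (qp gh) qle QmulA QmulC Qmul1x Qmul0x
  Qgh_idem Qfaith Qrefl Qanti Qtrans Qtotal Qmulle Q0.

Lemma qmul_p' x y : @mul QSTM (qp x) (qp y) = qp (mul x y).
Proof. apply qmul_p. Qed.
Lemma qle_p' x y : @le QSTM (qp x) (qp y) <-> leR d x y.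
Proof. apply qle_p. Qed.
Lemma qle_pf x y : @le QSTM (qp x) (qp y) -> leR d x y.
Proof. apply qle_p. Qed.
Lemma qle_pb x y : leR d x y -> @le QSTM (qp x) (qp y).
Proof. apply qle_p. Qed.
Lemma qghost x : @ghost QSTM (qp x) <-> exists u, R d x (mul gh u).
Proof. split.
  - intros [y Hy]. destruct (qp_ex y) as [u ->]. exists u. apply qp_eq.
    rewrite Hy. apply qmul_p.
  - intros [u Hu]. exists (qp u). simpl. rewrite qmul_p. now apply qp_eq.
Qed.
Lemma qp_surj : surj (qp : U -> QSTM).
Proof. intros c. destruct (qp_ex c) as [x ->]. now exists x. Qed.
End Quot.
Arguments qp {U} d x.
Arguments qs {U} d c.

Section Main.
Variables (U V : STM) (alpha : U -> V).
Hypothesis Ta : transmission alpha.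
Hypothesis Sa : surj alpha.

Definition A (u : U) : Prop := ghost (alpha u).

Lemma a0 : alpha zero = zero. Proof. apply Ta. Qed.
Lemma a1 : alpha one = one. Proof. apply Ta. Qed.
Lemma am x y : alpha (mul x y) = mul (alpha x) (alpha y). Proof. apply Ta. Qed.
Lemma agh x : alpha (mul gh x) = mul gh (alpha x). Proof. apply tr_gh, Ta. Qed.
Lemma A_ghost u : ghost u -> A u. Proof. intros. now apply tr_ghost. Qed.
Lemma A_mul x z : A x -> A (mul x z).
Proof. unfold A. rewrite am. intros [y ->]. exists (mul y (alpha z)). now rewrite mulA. Qed.
Lemma A_e x : A x -> alpha x = alpha (mul gh x).
Proof. intros H. rewrite agh. symmetry. now apply ghost_e. Qed.
Lemma A_gh x : A (mul gh x). Proof. apply A_ghost, ghost_gh. Qed.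

Definition ER (x y : U) : Prop := x = y \/ (A x /\ A y /\ mul gh x = mul gh y).
Definition KR (x y : U) : Prop := x = y \/ (A x /\ A y /\ alpha x = alpha y).

Lemma ER_gh x y : ER x y -> mul gh x = mul gh y.
Proof. intros [->|(_&_&H)]; auto. Qed.
Lemma KR_a x y : KR x y -> alpha x = alpha y.
Proof. intros [->|(_&_&H)]; auto. Qed.
Lemma ER_KR x y : ER x y -> KR x y.
Proof. intros [->|(H1&H2&H3)]; [now left|right; repeat split; auto].
  rewrite (A_e x), (A_e y); auto. now rewrite H3. Qed.

Definition dE : QData U.
Proof.
  refine {| R := ER; leR := fun x y => le (mul gh x) (mul gh y) |}.
  - intros; now left.
  - intros x y [->|(?&?&?)]; [now left|right; auto].
  - intros x y z H1 H2; destruct H1 as [->|(a1&a2&a3)]; [exact H2|];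
    destruct H2 as [<-|(b1&b2&b3)]; [right; auto| right; repeat split; auto; congruence].
  - intros x y z [->|(?&?&?)]; [now left|right; repeat split; try apply A_mul; auto].
    rewrite !mulA. congruence.
  - intros x x' y y' Hx Hy. now rewrite (ER_gh _ _ Hx), (ER_gh _ _ Hy).
  - intros x [H|(_&_&H)]; left; apply gh_faithful; auto.
    rewrite gg, gh0 in H. auto.
  - intros a. rewrite gg. apply le_refl.
  - intros a b H1 H2. rewrite !gg in *. left. now apply le_antisym.
  - intros a b c. rewrite !gg. apply le_trans.
  - intros a b. rewrite !gg. apply le_total.
  - intros a b c. rewrite !gh_mul2, !gg. apply le_mul.
  - intros a. rewrite gh0, gg. apply le_0.
Defined.

Definition dK : QData U.
Proof.
  refine {| R := KR; leR := fun x y => le (alpha x) (alpha y) |}.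
  - intros; now left.
  - intros x y [->|(?&?&?)]; [now left|right; auto].
  - intros x y z H1 H2; destruct H1 as [->|(a1&a2&a3)]; [exact H2|];
    destruct H2 as [<-|(b1&b2&b3)]; [right; auto| right; repeat split; auto; congruence].
  - intros x y z [->|(?&?&?)]; [now left|right; repeat split; try apply A_mul; auto].
    rewrite !am. congruence.
  - intros x x' y y' Hx Hy. now rewrite <- (KR_a _ _ Hx), <- (KR_a _ _ Hy).
  - intros x [H|(_&_&H)].
    + left; apply gh_faithful; auto.
    + rewrite agh, a0 in H. apply gh_faithful in H. right. repeat split.
      * unfold A. rewrite H. apply ghost0.
      * unfold A. rewrite a0. apply ghost0.
      * now rewrite H, a0.
  - intros a. rewrite agh. apply le_refl.
  - intros a b H1 H2. rewrite !agh in *. right. repeat split; try apply A_gh.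
    rewrite !agh. now apply le_antisym.
  - intros a b c. rewrite !agh. apply le_trans.
  - intros a b. rewrite !agh. apply le_total.
  - intros a b c. cbv beta. rewrite (am (mul gh a)), (am (mul gh b)), !agh. apply le_mul.
  - intros a. rewrite a0, agh. apply le_0.
Defined.

Definition X := QSTM U dE.
Definition W := QSTM U dK.
Definition lam : U -> X := qp dE.
Definition bet : X -> W := fun c => qp dK (qs dE c).
Definition mu : W -> V := fun w => alpha (qs dK w).

Lemma bet_p x : bet (qp dE x) = qp dK x.
Proof. unfold bet. apply qp_eq. apply ER_KR. apply (R_qs U dE). Qed.
Lemma mu_p x : mu (qp dK x) = alpha x.
Proof. unfold mu. apply KR_a. apply (R_qs U dK). Qed.

Lemma ghostX x : @ghost X (qp dE x) <-> A x.
Proof. unfold X. rewrite qghost. split.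
  - intros [u [->|(H&_)]]; auto. apply A_gh.
  - intros H. exists x. right. repeat split; auto. apply A_gh. now rewrite gg. Qed.
Lemma ghostW x : @ghost W (qp dK x) <-> A x.
Proof. unfold W. rewrite qghost. split.
  - intros [u [->|(H&_)]]; auto. apply A_gh.
  - intros H. exists x. right. repeat split; auto. apply A_gh. now apply A_e. Qed.

Ltac qdX c := let x := fresh "x" in destruct (qp_ex U dE c) as [x ->].
Ltac qdW c := let x := fresh "x" in destruct (qp_ex U dK c) as [x ->].

Lemma lam_tr : transmission lam.
Proof. unfold lam. repeat split; auto.
  - intros x y. symmetry. apply qmul_p'.
  - intros x y Hx Hy H. unfold X. apply qle_pb. simpl. now rewrite !ghost_e.
Qed.

Lemma lam_ic : ideal_compression lam.
Proof. split; [split; [apply lam_tr|split; [apply qp_surj|]]|].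
  - split; [|split].
    + intros x y Hx Hy H. apply qp_eq in H. destruct H as [H|(_&_&H)]; auto.
      now rewrite <- (ghost_e _ x), <- (ghost_e _ y).
    + intros w Hw. qdX w. apply ghostX in Hw. exists (mul gh x). split. apply ghost_gh.
      unfold lam. apply qp_eq. right. repeat split; auto. apply A_gh. now rewrite gg.
    + intros x y Hx Hy H. unfold lam in H. apply qle_pf in H. simpl in H.
      now rewrite <- (ghost_e _ x), <- (ghost_e _ y).
  - split; [|split].
    + unfold ghost_kernel. intros x y Hx Hy H. apply qp_eq in H.
      destruct H as [H|(H&_)]; auto. exfalso. apply Hx. now apply ghostX.
    + intros x Hx. exact Hx.
    + intros w Hw. qdX w. exists x. split; auto.
Qed.

Lemma bet_tr : transmission bet.
Proof. repeat split.
  - apply bet_p.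
  - apply bet_p.
  - intros c e. qdX c. qdX e. unfold X. rewrite qmul_p', !bet_p. unfold W. now rewrite qmul_p'.
  - apply bet_p.
  - intros c e Hc He H. qdX c. qdX e. rewrite !bet_p. unfold W. apply qle_pb. simpl.
    apply ghostX in Hc. apply ghostX in He. unfold X in H. apply qle_pf in H. simpl in H.
    rewrite (A_e x), (A_e x0); auto. apply Ta; auto; apply ghost_gh.
Qed.

Lemma bet_sgc : strict_gc bet.
Proof. split; [split; [apply bet_tr|split; [|split; [|split]]]|].
  - intros w Hw. qdW w. apply ghostW in Hw. exists (qp dE x). split.
    now apply ghostX. apply bet_p.
  - intros c e Hc _ He _. qdX c. qdX e. rewrite !bet_p. intros H. apply qp_eq in H.
    destruct H as [->|(H&_)]; auto. exfalso. apply Hc. now apply ghostX.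
  - intros c Hc _. qdX c. rewrite bet_p. intros H. apply Hc. apply ghostX. now apply ghostW.
  - intros w Hw. qdW w. exists (qp dE x). repeat split.
    + intros H. apply Hw. apply ghostW. now apply ghostX.
    + unfold zero_kernel. rewrite bet_p. intros H. apply Hw. rewrite H. apply ghost0.
    + apply bet_p.
  - intros c. qdX c. unfold zero_kernel. rewrite bet_p. intros H. apply qp_eq in H.
    apply ghostX. destruct H as [->|(H&_)]; auto. apply A_ghost, ghost0.
Qed.

Lemma mu_tr : transmission mu.
Proof. repeat split.
  - unfold W. simpl. rewrite mu_p. apply a0.
  - unfold W. simpl. rewrite mu_p. apply a1.
  - intros c e. qdW c. qdW e. unfold W. rewrite qmul_p', !mu_p. apply am.
  - unfold W. simpl. rewrite mu_p. apply Ta.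
  - intros c e _ _ H. qdW c. qdW e. rewrite !mu_p. unfold W in H. now apply qle_pf in H.
Qed.

Lemma mu_fc : fiber_contraction mu.
Proof. split; [apply mu_tr|split; [|split; [|split]]].
  - intros v. destruct (Sa v) as [u Hu]. exists (qp dK u). now rewrite mu_p.
  - intros c e Hc He. qdW c. qdW e. rewrite !mu_p. intros H. apply qp_eq. right.
    apply ghostW in Hc. apply ghostW in He. auto.
  - intros v [v' ->]. destruct (Sa v') as [u Hu]. exists (qp dK (mul gh u)). split.
    apply ghostW, A_gh. now rewrite mu_p, agh, Hu.
  - intros c e _ _. qdW c. qdW e. rewrite !mu_p. intros H. unfold W. now apply qle_pb.
Qed.

Lemma mu_tt : tangible_trans mu.
Proof. intros c Hc. qdW c. left. rewrite mu_p. intros H. apply Hc. now apply ghostW. Qed.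

Lemma fact : is_factorization alpha lam bet mu.
Proof. split; [apply lam_ic|split; [apply bet_sgc|split; [apply mu_fc|split; [apply mu_tt|]]]].
  intros x. unfold lam. now rewrite bet_p, mu_p. Qed.

Lemma part3 : exists (X W : STM) (lam : U -> X) (bet : X -> W) (mu : W -> V),
      is_factorization alpha lam bet mu /\
      surj lam /\ kernel_is lam (E_rel (ghost_kernel alpha)) /\
      surj bet /\
      (exists g : X -> V,
          (forall u : U, ghost u -> g (lam u) = alpha u) /\
          kernel_is bet (F_rel g)).
Proof.
  exists X, W, lam, bet, mu. split; [apply fact|split; [apply qp_surj|split; [|split]]].
  - intros x y. exact (qp_eq U dE x y).
  - intros w. qdW w. exists (qp dE x). apply bet_p.
  - exists (fun c => alpha (qs dE c)). split.
    + intros u _. unfold lam. apply KR_a, ER_KR, (R_qs U dE).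
    + intros c e. qdX c. qdX e. rewrite !bet_p. rewrite (qp_eq U dK). unfold F_rel.
      assert (G : forall y, alpha (qs dE (qp dE y)) = alpha y) by (intros; apply KR_a, ER_KR, (R_qs U dE)).
      assert (G2 : forall y, @mul X gh (qp dE y) = qp dE (mul gh y)) by (intros; apply qmul_p').
      rewrite !G2, !G, !ghostX. split.
      * intros [->|(H1&H2&H3)]. now left. right; left; auto.
      * intros [H|[H|(H1&H2)]].
        -- apply qp_eq in H. now apply ER_KR.
        -- now right.
        -- rewrite !agh in H1, H2. apply gh_faithful in H1. apply gh_faithful in H2.
           right. unfold A. rewrite H1, H2. repeat split; apply ghost0.
Qed.
End Main.

Lemma induce {U X X' : Type} (f : U -> X) (f' : U -> X') :
  surj f -> (forall u v, f u = f v -> f' u = f' v) -> {h : X -> X' | forall u, h (f u) = f' u}.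
Proof. intros Sf Hk.
  exists (fun c => f' (proj1_sig (constructive_indefinite_description _ (Sf c)))).
  intros u. destruct (constructive_indefinite_description _ (Sf (f u))) as [v Hv]. simpl.
  now apply Hk. Qed.

Lemma induced_trans {U X X' : STM} (f : U -> X) (f' : U -> X') (h : X -> X') :
  transmission f -> surj f -> transmission f' -> (forall u, h (f u) = f' u) ->
  (forall c d, ghost c -> ghost d -> le c d -> le (h c) (h d)) -> transmission h.
Proof. intros (F0&F1&Fm&Fg&_) Sf (G0&G1&Gm&Gg&_) Hh Ho. repeat split; auto.
  - now rewrite <- F0, Hh.
  - now rewrite <- F1, Hh.
  - intros c d. destruct (Sf c) as [u <-]. destruct (Sf d) as [v <-].
    now rewrite <- Fm, !Hh.
  - now rewrite <- Fg, Hh.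
Qed.

Section Gen.
Variables (U V X W : STM) (alpha : U -> V) (lam : U -> X) (bet : X -> W) (mu : W -> V).
Hypothesis fa : is_factorization alpha lam bet mu.

Lemma Tlam : transmission lam. Proof. apply fa. Qed.
Lemma Slam : surj lam. Proof. apply fa. Qed.
Lemma Tbet : transmission bet. Proof. apply fa. Qed.
Lemma Tmu : transmission mu. Proof. apply fa. Qed.
Lemma Hf u : alpha u = mu (bet (lam u)). Proof. apply fa. Qed.

Lemma L1 u : ghost (lam u) <-> ghost (alpha u).
Proof. destruct fa as (IC&((Tb&Bgs&Binj&Btang&Bsurj)&Hstr)&FC&TT&Hf). split.
  - intros H. rewrite Hf. apply tr_ghost. apply FC. apply tr_ghost; auto.
  - intros H. destruct (classic (ghost (lam u))) as [G|G]; auto. exfalso.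
    assert (nz : ~ zero_kernel bet (lam u)) by (intros Z; apply G; now apply Hstr).
    destruct (TT _ (Btang _ G nz)) as [T|Z].
    + apply T. now rewrite <- Hf.
    + apply nz. exact (fc_zero _ _ FC Z).
Qed.

Lemma LW u : ghost (bet (lam u)) <-> ghost (alpha u).
Proof. split.
  - intros H. rewrite Hf. apply tr_ghost; auto. apply Tmu.
  - intros H. apply tr_ghost. apply Tbet. now apply L1. Qed.

Lemma L2 u v : lam u = lam v <-> E_rel (ghost_kernel alpha) u v.
Proof. destruct fa as ((FCl&Iinj&Itang&Isurj)&_&_&_&_).
  destruct FCl as (Tl&Sl&Gi&Gs&Gr). unfold E_rel, ghost_kernel. split.
  - intros H. destruct (classic (ghost (alpha u))) as [Au|Au].
    + right. assert (Av : ghost (alpha v)) by (apply L1; rewrite <- H; now apply L1).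
      repeat split; auto. apply Gi; try apply ghost_gh.
      rewrite !tr_gh by exact Tl. rewrite H. reflexivity.
    + left. apply Iinj; auto.
      * unfold ghost_kernel. now rewrite L1.
      * unfold ghost_kernel. rewrite <- H, L1. auto.
  - intros [->|(Au&Av&E)]; auto.
    rewrite <- (ghost_e _ (lam u)), <- (ghost_e _ (lam v)) by (apply L1; auto).
    rewrite <- !tr_gh by exact Tl. now rewrite E.
Qed.

Lemma L3 u v : bet (lam u) = bet (lam v) <->
  u = v \/ (ghost (alpha u) /\ ghost (alpha v) /\ alpha u = alpha v).
Proof. pose proof fa as (IC&((Tb&Bgs&Binj&Btang&Bsurj)&Hstr)&FC&TT&Hf).
  destruct FC as (Tm&Sm&Mi&Ms&Mr). split.
  - intros H. destruct (classic (ghost (alpha u))) as [Au|Au].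
    + right. assert (Av : ghost (alpha v)) by (apply LW; rewrite <- H; now apply LW).
      repeat split; auto. now rewrite !Hf, H.
    + left. assert (Av : ~ ghost (alpha v)) by (rewrite <- LW, <- H, LW; auto).
      assert (E : lam u = lam v).
      { apply Binj; auto.
      * unfold tangible. now rewrite L1.
      * intros Z. apply Au, L1, Hstr, Z.
      * unfold tangible. now rewrite L1.
      * intros Z. apply Av, L1, Hstr, Z. }
      apply L2 in E. destruct E as [E|(E&_)]; [exact E|contradiction].
  - intros [->|(Au&Av&E)]; auto. apply Mi; try apply LW; auto. now rewrite <- !Hf.
Qed.

Lemma SBL : surj (fun u => bet (lam u)).
Proof. pose proof fa as (IC&((Tb&Bgs&Binj&Btang&Bsurj)&Hstr)&FC&TT&Hf).
  intros w. destruct (classic (ghost w)) as [G|G].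
  - destruct (Bgs w G) as (x&_&<-). destruct (Slam x) as [u <-]. now exists u.
  - destruct (Bsurj w G) as (x&_&_&<-). destruct (Slam x) as [u <-]. now exists u.
Qed.
End Gen.

Section Uniq.
Variables (U V X W X' W' : STM) (alpha : U -> V) (lam : U -> X) (bet : X -> W) (mu : W -> V)
  (lam' : U -> X') (bet' : X' -> W') (mu' : W' -> V).
Hypothesis Ta : transmission alpha.
Hypothesis fa : is_factorization alpha lam bet mu.
Hypothesis fb : is_factorization alpha lam' bet' mu'.


Lemma lam_ord u v : ghost (lam u) -> ghost (lam v) -> le (lam u) (lam v) -> le (lam' u) (lam' v).
Proof. intros Gu Gv H.
  pose proof fa as ((FCl&_)&_). destruct FCl as (Tl&Sl&Gi&Gs&Gr).
  pose proof (Tlam _ _ _ _ _ _ _ _ fb) as Tl'.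
  assert (H2 : le (mul gh u) (mul gh v)).
  { apply Gr; try apply ghost_gh. rewrite !tr_gh by exact Tl. rewrite !ghost_e by auto. exact H. }
  assert (Gu' : ghost (lam' u)) by (apply (L1 _ _ _ _ _ _ _ _ fb); apply (L1 _ _ _ _ _ _ _ _ fa); auto).
  assert (Gv' : ghost (lam' v)) by (apply (L1 _ _ _ _ _ _ _ _ fb); apply (L1 _ _ _ _ _ _ _ _ fa); auto).
  rewrite <- (ghost_e _ (lam' u)), <- (ghost_e _ (lam' v)) by auto.
  rewrite <- !tr_gh by exact Tl'. apply Tl'; auto; apply ghost_gh.
Qed.

Lemma bl_ord u v : ghost (bet (lam u)) -> ghost (bet (lam v)) -> le (bet (lam u)) (bet (lam v)) ->
  le (bet' (lam' u)) (bet' (lam' v)).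
Proof. intros Gu Gv H.
  pose proof fb as (_&_&(Tm'&Sm'&Mi'&Ms'&Mr')&_&_).
  apply Mr'.
  - apply (LW _ _ _ _ _ _ _ _ fb); apply (LW _ _ _ _ _ _ _ _ fa); auto.
  - apply (LW _ _ _ _ _ _ _ _ fb); apply (LW _ _ _ _ _ _ _ _ fa); auto.
  - rewrite <- !(Hf _ _ _ _ _ _ _ _ fb), !(Hf _ _ _ _ _ _ _ _ fa). apply (Tmu _ _ _ _ _ _ _ _ fa); auto.
Qed.
End Uniq.

Lemma uniq (U V X W X' W' : STM) (alpha : U -> V) (lam : U -> X) (bet : X -> W) (mu : W -> V)
  (lam' : U -> X') (bet' : X' -> W') (mu' : W' -> V) :
      is_factorization alpha lam bet mu ->
      is_factorization alpha lam' bet' mu' ->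
      exists (rho : X -> X') (rhoinv : X' -> X) (sig : W -> W') (siginv : W' -> W),
        st_iso rho rhoinv /\ st_iso sig siginv /\
        (forall u : U, ghost u -> rho (lam u) = lam' u) /\
        (forall w : W, ghost w -> mu' (sig w) = mu w) /\
        (forall x, lam' x = rho (lam x)) /\
        (forall w', mu' w' = mu (siginv w')) /\
        (forall x', bet' x' = sig (bet (rhoinv x'))).
Proof. intros fa fb.
  destruct (induce lam lam' (Slam _ _ _ _ _ _ _ _ fa)) as [rho Hr].
  { intros u v H. apply (L2 _ _ _ _ _ _ _ _ fb), (L2 _ _ _ _ _ _ _ _ fa), H. }
  destruct (induce lam' lam (Slam _ _ _ _ _ _ _ _ fb)) as [rhoi Hri].
  { intros u v H. apply (L2 _ _ _ _ _ _ _ _ fa), (L2 _ _ _ _ _ _ _ _ fb), H. }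
  destruct (induce (fun u => bet (lam u)) (fun u => bet' (lam' u)) (SBL _ _ _ _ _ _ _ _ fa)) as [sig Hs].
  { intros u v H. apply (L3 _ _ _ _ _ _ _ _ fb), (L3 _ _ _ _ _ _ _ _ fa), H. }
  destruct (induce (fun u => bet' (lam' u)) (fun u => bet (lam u)) (SBL _ _ _ _ _ _ _ _ fb)) as [sigi Hsi].
  { intros u v H. apply (L3 _ _ _ _ _ _ _ _ fa), (L3 _ _ _ _ _ _ _ _ fb), H. }
  pose proof (Slam _ _ _ _ _ _ _ _ fa) as Sl.
  pose proof (Slam _ _ _ _ _ _ _ _ fb) as Sl'.
  pose proof (SBL _ _ _ _ _ _ _ _ fa) as Sb.
  pose proof (SBL _ _ _ _ _ _ _ _ fb) as Sb'.
  pose proof (Tlam _ _ _ _ _ _ _ _ fa) as Tl.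
  pose proof (Tlam _ _ _ _ _ _ _ _ fb) as Tl'.
  assert (Tbl : transmission (fun u => bet (lam u))).
  { pose proof (Tbet _ _ _ _ _ _ _ _ fa) as (B0&B1&Bm&Bg&Bo). destruct Tl as (L0&L1'&Lm&Lg&Lo).
    repeat split; intros; rewrite ?L0, ?L1', ?Lm, ?Lg; auto. apply Bo; try apply tr_ghost; auto; repeat split; auto. }
  assert (Tbl' : transmission (fun u => bet' (lam' u))).
  { pose proof (Tbet _ _ _ _ _ _ _ _ fb) as (B0&B1&Bm&Bg&Bo). destruct Tl' as (L0&L1'&Lm&Lg&Lo).
    repeat split; intros; rewrite ?L0, ?L1', ?Lm, ?Lg; auto. apply Bo; try apply tr_ghost; auto; repeat split; auto. }
  exists rho, rhoi, sig, sigi.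
  refine (conj (conj _ (conj _ (conj _ _))) (conj (conj _ (conj _ (conj _ _))) (conj _ (conj _ (conj _ (conj _ _)))))).
  - apply (induced_trans lam lam'); auto. intros c d Gc Gd H.
    destruct (Sl c) as [u <-]. destruct (Sl d) as [v <-]. rewrite !Hr.
    apply (lam_ord _ _ _ _ _ _ _ _ _ _ _ _ _ fa fb); auto.
  - apply (induced_trans lam' lam); auto. intros c d Gc Gd H.
    destruct (Sl' c) as [u <-]. destruct (Sl' d) as [v <-]. rewrite !Hri.
    apply (lam_ord _ _ _ _ _ _ _ _ _ _ _ _ _ fb fa); auto.
  - intros c. destruct (Sl c) as [u <-]. now rewrite Hr, Hri.
  - intros c. destruct (Sl' c) as [u <-]. now rewrite Hri, Hr.
  - apply (induced_trans (fun u => bet (lam u)) (fun u => bet' (lam' u))); auto. intros c d Gc Gd H.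
    destruct (Sb c) as [u <-]. destruct (Sb d) as [v <-]. rewrite !Hs.
    apply (bl_ord _ _ _ _ _ _ _ _ _ _ _ _ _ fa fb); auto.
  - apply (induced_trans (fun u => bet' (lam' u)) (fun u => bet (lam u))); auto. intros c d Gc Gd H.
    destruct (Sb' c) as [u <-]. destruct (Sb' d) as [v <-]. rewrite !Hsi.
    apply (bl_ord _ _ _ _ _ _ _ _ _ _ _ _ _ fb fa); auto.
  - intros c. destruct (Sb c) as [u <-]. now rewrite Hs, Hsi.
  - intros c. destruct (Sb' c) as [u <-]. now rewrite Hsi, Hs.
  - intros u _. apply Hr.
  - intros w _. destruct (Sb w) as [u <-]. rewrite Hs.
    now rewrite <- (Hf _ _ _ _ _ _ _ _ fa), <- (Hf _ _ _ _ _ _ _ _ fb).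
  - intros u. now rewrite Hr.
  - intros w. destruct (Sb' w) as [u <-]. rewrite Hsi.
    now rewrite <- (Hf _ _ _ _ _ _ _ _ fa), <- (Hf _ _ _ _ _ _ _ _ fb).
  - intros x. destruct (Sl' x) as [u <-]. rewrite Hri. now rewrite Hs.
Qed.

Theorem theorem2p8 (U V : STM) (alpha : U -> V) :
  transmission alpha -> surj alpha ->
  (* (i) existence *)
  (exists (X W : STM) (lam : U -> X) (bet : X -> W) (mu : W -> V),
      is_factorization alpha lam bet mu) /\
  (* (ii) essential uniqueness *)
  (forall (X W X' W' : STM) (lam : U -> X) (bet : X -> W) (mu : W -> V)
          (lam' : U -> X') (bet' : X' -> W') (mu' : W' -> V),
      is_factorization alpha lam bet mu ->
      is_factorization alpha lam' bet' mu' ->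
      exists (rho : X -> X') (rhoinv : X' -> X) (sig : W -> W') (siginv : W' -> W),
        st_iso rho rhoinv /\ st_iso sig siginv /\
        (* rho over M, sigma over N *)
        (forall u : U, ghost u -> rho (lam u) = lam' u) /\
        (forall w : W, ghost w -> mu' (sig w) = mu w) /\
        (forall x, lam' x = rho (lam x)) /\
        (forall w', mu' w' = mu (siginv w')) /\
        (forall x', bet' x' = sig (bet (rhoinv x')))) /\
  (* (iii) canonical choice: lambda = pi_{E(U, A_alpha)}, beta = pi_{F(Ubar, gamma)} *)
  (exists (X W : STM) (lam : U -> X) (bet : X -> W) (mu : W -> V),
      is_factorization alpha lam bet mu /\
      surj lam /\ kernel_is lam (E_rel (ghost_kernel alpha)) /\
      surj bet /\
      (exists g : X -> V,
          (forall u : U, ghost u -> g (lam u) = alpha u) /\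
          kernel_is bet (F_rel g))).
Proof.
  intros Ta Sa. pose proof (part3 U V alpha Ta Sa) as P.
  split; [|split; [|exact P]].
  - destruct P as (X0&W0&l&b&m&F&_). now exists X0, W0, l, b, m.
  - intros. eapply uniq; eauto.
Qed.
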